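(* Consider the multiset combinatorial auction model described in the context, where the auction's allocation is a solution of the winner determination problem (WDP) on the inferred values. (i) In an auction using only demand queries, adding demand queries can reduce efficiency: a single additional demand query can cause an efficiency drop arbitrarily close to $100\%$, i.e., for every $\delta>0$ there exist an instance, a finite set of demand-query price vectors with truthful responses for which the WDP allocation has efficiency $1$, and one additional price vector such that, after adding the (truthful) responses to that demand query, the WDP allocation has efficiency less than $\delta$. (ii) By comparison, in an auction using only value queries and assuming truthful bidding, adding additional value queries can never reduce the efficiency of the WDP allocation.
   Context: Multiset combinatorial auction: bidders $N=\{1,\dots,n\}$, items $M=\{1,\dots,m\}$ with capacities $c\in\mathbb{N}^m$. Bundles are $x\in\mathcal{X}=\{0,\dots,c_1\}\times\cdots\times\{0,\dots,c_m\}$. Each bidder $i$ has a value function $v_i:\mathcal{X}\to\mathbb{R}_{\ge0}$. Feasible allocations: $\mathcal{F}=\{a\in\mathcal{X}^n:\sum_i a_{ij}\le c_j\ \forall j\}$. Social welfare $V(a)=\sum_i v_i(a_i)$; efficiency of $a$ is $V(a)/\max_{a'\in\mathcal{F}}V(a')$. A demand query at prices $p\in\mathbb{R}^m_{\ge0}$ is answered truthfully by bidder $i$ with some $x_i^*(p)\in\arg\max_{x\in\mathcal{X}}\{v_i(x)-\langle p,x\rangle\}$; a value query for $x$ is answered with $v_i(x)$. With reports $R_i$ consisting of demand responses $R_i^{DQ}$ (pairs $(x,p)$) and value responses $R_i^{VQ}$ (pairs $(x,v_i(x))$), the inferred value is $\tilde v_i(x;R_i)=v_i(x)$ if $x$ appears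 in $R_i^{VQ}$ and otherwise $\max(\{\langle x,p\rangle:(x,p)\in R_i^{DQ}\}\cup\{0\})$. The WDP allocation is $a^*(R)\in\arg\max_{a\in\mathcal{F}}\sum_i\tilde v_i(a_i;R_i)$.
   Formalization: Each $v_i$ vanishes on the empty bundle, assumed in (ii) and imposed on the instance in (i); (i) concerns every WDP allocation, and in (ii) each WDP allocation after has efficiency at least that of some WDP allocation before. Apart from conventions, each condition added here is assumed in the paper as well or is needed for the statement above to hold. *)

(* Defs.v *)
From HB Require Import structures.
From mathcomp Require Import all_boot all_order all_algebra.
Set Implicit Arguments.
Unset Strict Implicit.
Unset Printing Implicit Defensive.
Import Order.TTheory GRing.Theory Num.Theory.
Local Open Scope ring_scope.

Section Auction.
Variable R : realFieldType.
Variable n m : nat.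
Variable c : 'I_m -> nat.

Definition bundle := {dffun forall j : 'I_m, 'I_(c j).+1}.

Definition empty_bundle : bundle := [ffun j => ord0].

(* Price vectors p in R^m (nonnegativity imposed where used). *)
Definition prices := {ffun 'I_m -> R}.

Definition pairing (x : bundle) (p : prices) : R :=
  \sum_(j < m) p j * (nat_of_ord (x j))%:R.

Definition is_demand (v : bundle -> R) (p : prices) (x : bundle) : Prop :=
  forall y : bundle, v y - pairing y p <= v x - pairing x p.

Definition allocation := {ffun 'I_n -> bundle}.

Definition feasible (a : allocation) : bool :=
  [forall j : 'I_m, (\sum_(i < n) nat_of_ord (a i j) <= c j)%N].

Definition welfare (v : 'I_n -> bundle -> R) (a : allocation) : R :=
  \sum_(i < n) v i (a i).

(* max_{a' in F} V(a')  (F is nonempty and values are >= 0). *)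
Definition opt_welfare (v : 'I_n -> bundle -> R) : R :=
  \big[Num.max/0]_(a : allocation | feasible a) welfare v a.

Definition efficiency (v : 'I_n -> bundle -> R) (a : allocation) : R :=
  welfare v a / opt_welfare v.

(* Inferred value ~v_i(x; R_i): reports consist of demand responses DQ
   (pairs (x,p)) and value-queried bundles VQ (truthfully answered with
   v_i(x)). *)
Definition inferred_value (v : bundle -> R) (DQ : seq (bundle * prices))
    (VQ : seq bundle) (x : bundle) : R :=
  if x \in VQ then v x
  else \big[Num.max/0]_(q <- DQ | q.1 == x) pairing x q.2.

Definition is_WDP (vt : 'I_n -> bundle -> R) (a : allocation) : Prop :=
  feasible a /\ forall a' : allocation, feasible a' -> welfare vt a' <= welfare vt a.

Definition dq_reports (resp : 'I_n -> prices -> bundle) (i : 'I_n)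
    (ps : seq prices) : seq (bundle * prices) :=
  [seq (resp i p, p) | p <- ps].

End Auction.

(* Main.v *)
Require Import Defs.
From HB Require Import structures.
From mathcomp Require Import all_boot all_order all_algebra.
From mathcomp Require Import lra.
Import Order.TTheory GRing.Theory Num.Theory.
Local Open Scope ring_scope.

Definition c2 : 'I_2 -> nat := fun _ => 1%N.
Definition bAB : bundle c2 := [ffun j => (@ord_max 1 : 'I_(c2 j).+1)].
Definition bA : bundle c2 :=
  [ffun j => if j == ord0 then (@ord_max 1 : 'I_(c2 j).+1) else ord0].
Definition mkp (R : realFieldType) (a b : R) : prices R 2 :=
  [ffun j : 'I_2 => if j == ord0 then a else b].

Arguments mkp {R}.

Lemma pairingE (R : realFieldType) (x : bundle c2) (p : prices R 2) :
  pairing x p = p ord0 * (nat_of_ord (x ord0))%:R + p ord_max * (nat_of_ord (x ord_max))%:R.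
Proof. rewrite /pairing big_ord_recl big_ord1; by have -> : lift ord0 ord0 = ord_max :> 'I_2 by apply: val_inj. Qed.

Lemma pairing_ge0 (R : realFieldType) (x : bundle c2) (p : prices R 2) :
  (forall j, 0 <= p j) -> 0 <= pairing x p.
Proof. move=> H; apply: sumr_ge0 => j _; apply: mulr_ge0 => //. Qed.

Lemma bA_neq : bA != bAB.
Proof. by apply/eqP => /ffunP /(_ ord_max); rewrite !ffunE. Qed.


Lemma pAB (R : realFieldType) (a b : R) : pairing bAB (mkp a b) = a + b.
Proof. by rewrite pairingE !ffunE /= mulr1 mulr1. Qed.

Lemma pA (R : realFieldType) (a b : R) : pairing bA (mkp a b) = a.
Proof. by rewrite pairingE !ffunE /= mulr1 mulr0 addr0. Qed.

Lemma feas1 (a : allocation 1 c2) : feasible a.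
Proof. by apply/forallP => j; rewrite big_ord1; rewrite -ltnS; exact: ltn_ord. Qed.

Lemma welf1 (R : realFieldType) (w : 'I_1 -> bundle c2 -> R) (a : allocation 1 c2) :
  welfare w a = w ord0 (a ord0).
Proof. by rewrite /welfare big_ord1. Qed.

Definition aof (x : bundle c2) : allocation 1 c2 := [ffun => x].

Lemma opt1 (R : realFieldType) (v : 'I_1 -> bundle c2 -> R) :
  (forall x, v ord0 x <= v ord0 bAB) -> 0 <= v ord0 bAB -> opt_welfare v = v ord0 bAB.
Proof.
move=> H H0; apply/le_anti/andP; split.
  apply: bigmax_le => // a _; rewrite welf1; exact: H.
apply: (bigmax_sup (aof bAB)); first exact: feas1.
by rewrite welf1 ffunE.
Qed.

Lemma part1 :
  (forall (R : realFieldType) (delta : R), 0 < delta ->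
    exists (n m : nat) (c : 'I_m -> nat) (v : 'I_n -> bundle c -> R),
      (forall i x, 0 <= v i x) /\ (forall i, v i (empty_bundle c) = 0) /\
      exists (ps : seq (prices R m)) (pnew : prices R m)
             (resp : 'I_n -> prices R m -> bundle c),
        (forall p, p \in pnew :: ps ->
           (forall j, 0 <= p j) /\ (forall i, is_demand (v i) p (resp i p))) /\
        (forall a, is_WDP (fun i => inferred_value (v i) (dq_reports resp i ps) [::]) a ->
           efficiency v a = 1) /\
        (forall a, is_WDP (fun i => inferred_value (v i)
                                       (dq_reports resp i (rcons ps pnew)) [::]) a ->
           efficiency v a < delta)).
Proof.
move=> R delta d0.
pose eps := Num.min (delta / 2) 1.
have e0 : 0 < eps by rewrite lt_min ltr01 andbT divr_gt0.
have e1 : eps <= 1 by rewrite ge_min lexx orbT.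
have ed : eps < delta.
  apply: (le_lt_trans (y := delta / 2)); first by rewrite ge_min lexx.
  by rewrite ltr_pdivrMr // ltr_pMr // ltr1n.
pose t := eps / 2.
have t0 : 0 < t by rewrite divr_gt0.
have te : t < eps by rewrite ltr_pdivrMr // ltr_pMr // ltr1n.
pose v := fun (i : 'I_1) (x : bundle c2) => if x == bAB then 1 else if x == bA then eps else (0:R).
have vE : forall x, v ord0 x = if x == bAB then 1 else if x == bA then eps else 0 by [].
exists 1%N, 2%N, c2, v.
split.
  by move=> i x; rewrite /v; case: ifP => _ //; case: ifP => _ //; exact: ltW.
split.
  move=> i; rewrite /v; case: ifP => [/eqP/ffunP/(_ ord0)|_]; first by rewrite !ffunE.
  by case: ifP => [/eqP/ffunP/(_ ord0)|_]; first by rewrite !ffunE.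
pose p1 := mkp t 0.
pose pn := mkp eps 1.
have pne : (pn == p1) = false.
  apply/eqP => /ffunP /(_ ord_max); rewrite !ffunE /=; apply/eqP; exact: oner_neq0.
have pne' : (p1 == pn) = false by rewrite eq_sym.
pose resp := fun (i : 'I_1) (p : prices R 2) => if p == pn then bA else bAB.
exists [:: p1], pn, resp.
have bA_AB : (bA == bAB) = false by apply/negbTE; exact: bA_neq.
have bAB_bA : (bAB == bA) = false by apply/negbTE; rewrite eq_sym bA_neq.
have opt : opt_welfare v = 1.
  rewrite opt1 ?vE ?eqxx //.
  move=> x; rewrite vE; case: ifP => _ //; case: ifP => _ //; exact: ltW.
have pp : forall j, 0 <= p1 j by move=> j; rewrite !ffunE; case: ifP => _ //; exact: ltW.
have pnp : forall j, 0 <= pn j by move=> j; rewrite !ffunE; case: ifP => _ //; exact: ltW.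
split.
  move=> p; rewrite !inE => /orP[/eqP->|/eqP->].
    split => // i y; rewrite /resp eqxx /v pA; case: ifP => [/eqP->|_].
      rewrite pAB eqxx bA_AB; lra.
    case: ifP => [/eqP->|_]; first by rewrite bA_AB eqxx pA.
    rewrite bA_AB eqxx subrr sub0r oppr_le0; exact: pairing_ge0.
  split => // i y; rewrite /resp pne' /v pAB eqxx; case: ifP => [/eqP->|_].
    by rewrite pAB lexx.
  case: ifP => [/eqP->|_]; first by rewrite pA; lra.
  have := @pairing_ge0 _ y _ pp; lra.
split.
  move=> a [_ W]; have := W (aof bAB) (feas1 _).
  rewrite !welf1 /inferred_value /dq_reports /= !big_cons !big_nil /= /resp pne' /=.
  rewrite ffunE eqxx pAB addr0 max_l; last exact: ltW.
  case: ifP => [/eqP E _|_]; last by lra.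
  by rewrite /efficiency welf1 -E opt /v eqxx divr1.
move=> a [_ W]; have := W (aof bA) (feas1 _).
rewrite !welf1 /inferred_value /dq_reports /= !big_cons !big_nil /= /resp pne' eqxx /=.
rewrite ffunE bAB_bA eqxx pA max_l; last exact: ltW.
case: ifP => [/eqP E|_].
  rewrite -E pAB addr0 bA_AB max_l; last exact: ltW.
  lra.
case: ifP => [/eqP E _|_]; last by lra.
by rewrite /efficiency welf1 -E opt /v bA_AB eqxx divr1.
Qed.

Lemma part2 :
  (forall (R : realFieldType) (n m : nat) (c : 'I_m -> nat) (v : 'I_n -> bundle c -> R),
    (forall i x, 0 <= v i x) -> (forall i, v i (empty_bundle c) = 0) ->
    forall Q Q' : 'I_n -> seq (bundle c),
      (forall i, {subset Q i <= Q' i}) ->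
      forall a', is_WDP (fun i => inferred_value (v i) [::] (Q' i)) a' ->
      exists a, is_WDP (fun i => inferred_value (v i) [::] (Q i)) a /\
                efficiency v a <= efficiency v a').
Proof.
move=> R n m c v v0 vE Q Q' QQ a' [fa' Wa'].
set vt := (fun i => inferred_value (v i) [::] (Q i)).
set vt' := (fun i => inferred_value (v i) [::] (Q' i)).
have vtE i x : vt i x = if x \in Q i then v i x else 0.
  by rewrite /vt /inferred_value big_nil.
have vtE' i x : vt' i x = if x \in Q' i then v i x else 0.
  by rewrite /vt' /inferred_value big_nil.
pose aE : allocation n c := [ffun i => empty_bundle c].
have faE : feasible aE.
  apply/forallP => j; rewrite big1 // => i _; by rewrite !ffunE.
case: (@arg_maxP _ _ _ aE (fun a => feasible a) (welfare vt) faE) => a0 fa0 Wa0.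
pose a : allocation n c := [ffun i => if a0 i \in Q i then a0 i else empty_bundle c].
have fa : feasible a.
  apply/forallP => j; apply: leq_trans (forallP fa0 j).
  apply: leq_sum => i _; rewrite ffunE; case: ifP => // _; by rewrite ffunE.
have Wa : welfare vt a = welfare vt a0.
  apply: eq_bigr => i _; rewrite ffunE !vtE; case H: (a0 i \in Q i); rewrite ?H //.
  by case: ifP => // _; rewrite vE.
have Va : welfare v a = welfare vt a.
  apply: eq_bigr => i _; rewrite ffunE vtE; case: ifP => H; first by rewrite H.
  by case: ifP => _; rewrite vE.
exists a; split.
  split => // a2 fa2; rewrite Wa; exact: Wa0.
have le1 : welfare v a <= welfare v a'.
  rewrite Va; apply: (le_trans (y := welfare vt' a)).
    apply: ler_sum => i _; rewrite vtE vtE'; case: ifP => H.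
      by rewrite (QQ _ _ H).
    by case: ifP.
  apply: le_trans (Wa' _ fa) _.
  apply: ler_sum => i _; rewrite /vt' /inferred_value big_nil; by case: ifP.
rewrite /efficiency; apply: ler_wpM2r => //.
rewrite invr_ge0 /opt_welfare.
apply: bigmax_sup faE _; rewrite /welfare big1 // => i _; by rewrite ffunE.
Qed.

Theorem proposition3p3 :
  (* (i) demand queries: one extra query can drop efficiency from 1 to < delta *)
  (forall (R : realFieldType) (delta : R), 0 < delta ->
    exists (n m : nat) (c : 'I_m -> nat) (v : 'I_n -> bundle c -> R),
      (forall i x, 0 <= v i x) /\ (forall i, v i (empty_bundle c) = 0) /\
      exists (ps : seq (prices R m)) (pnew : prices R m)
             (resp : 'I_n -> prices R m -> bundle c),
        (forall p, p \in pnew :: ps ->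
           (forall j, 0 <= p j) /\ (forall i, is_demand (v i) p (resp i p))) /\
        (forall a, is_WDP (fun i => inferred_value (v i) (dq_reports resp i ps) [::]) a ->
           efficiency v a = 1) /\
        (forall a, is_WDP (fun i => inferred_value (v i)
                                       (dq_reports resp i (rcons ps pnew)) [::]) a ->
           efficiency v a < delta))
  /\
  (* (ii) value queries: adding (truthful) value queries never reduces efficiency *)
  (forall (R : realFieldType) (n m : nat) (c : 'I_m -> nat) (v : 'I_n -> bundle c -> R),
    (forall i x, 0 <= v i x) -> (forall i, v i (empty_bundle c) = 0) ->
    forall Q Q' : 'I_n -> seq (bundle c),
      (forall i, {subset Q i <= Q' i}) ->
      forall a', is_WDP (fun i => inferred_value (v i) [::] (Q' i)) a' ->
      exists a, is_WDP (fun i => inferred_value (v i) [::] (Q i)) a /\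
                efficiency v a <= efficiency v a').
Proof. split; [exact: part1 | exact: part2]. Qed.
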